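(* Let $\ell$ be a positive integer. Construct $\mathcal C^*\subseteq\mathcal C$ and the sets $\mathcal U_v$ ($v\in\mathcal C^*$) as described in the context. Then: (C1) for all distinct $v,v'\in\mathcal C^*$, $d(v,v')>2\ell\max\{d_{av}(v),d_{av}(v')\}$; (C2) for every $j\in\mathcal C$ there is $v\in\mathcal C^*$ with $d_{av}(v)\le d_{av}(j)$ and $d(v,j)\le2\ell d_{av}(j)$; (C3) $\sum_{i\in\mathcal U_v}y_i\ge1-1/\ell$ for every $v\in\mathcal C^*$; (C4) for every $v\in\mathcal C^*$, $i\in\mathcal U_v$ and $j\in\mathcal C$, $d(i,v)\le d(i,j)+2\ell d_{av}(j)$.
   Context: Setting: finite sets $\mathcal F$ (facility locations) and $\mathcal C$ (clients), a metric $d$ on $\mathcal F\cup\mathcal C$, positive integers $k,u$, and real numbers $x_{i,j}\ge0$, $y_i\ge0$ ($i\in\mathcal F$, $j\in\mathcal C$) with $\sum_{i\in\mathcal F}x_{i,j}=1$ for all $j$, $\sum_i y_i\le k$, $x_{i,j}\le y_i$ for all $i,j$, and $\sum_{j}x_{i,j}\le u y_i$ for all $i$. Let $d_{av}(j)=\sum_{i\in\mathcal F}x_{i,j}d(i,j)$. Construction of $\mathcal C^*$: start with $\mathcal C^*=\emptyset$ and $R=\mathcal C$; while $R\neq\emptyset$, choose $v\in R$ with smallest $d_{av}(v)$, add $v$ to $\mathcal C^*$, and remove from $R$ all $j\in R$ with $d(j,v)\le2\ell d_{av}(j)$ (this includes $v$). Then each location $i\in\mathcal F$ is put into $\mathcal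 U_v$ for one $v\in\mathcal C^*$ closest to $i$ (ties broken arbitrarily), so $\{\mathcal U_v\}_{v\in\mathcal C^*}$ partitions $\mathcal F$. *)

(* Defs.v *)
From HB Require Import structures.
From mathcomp Require Import all_boot all_order all_algebra.
Set Implicit Arguments. Unset Strict Implicit. Unset Printing Implicit Defensive.
Import Order.TTheory GRing.Theory Num.Theory.
Local Open Scope ring_scope.

Section Defs.
Variables (R : realFieldType) (T : finType).

Definition dav (F : {set T}) (x : T -> T -> R) (d : T -> T -> R) (j : T) : R :=
  \sum_(i in F) x i j * d i j.

Definition metric_on (S : {set T}) (d : T -> T -> R) : Prop :=
  [/\ {in S &, forall a b, d a b = 0 <-> a = b},
      {in S &, forall a b, 0 <= d a b},
      {in S &, forall a b, d a b = d b a} &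
      {in S & &, forall a b c, d a c <= d a b + d b c}].

(* greedy_run av d l Rem s : the greedy process started with remaining set Rem
   may choose the centres s (in that order) and terminate with R = empty. *)
Inductive greedy_run (av : T -> R) (d : T -> T -> R) (l : nat)
  : {set T} -> seq T -> Prop :=
| greedy_nil : greedy_run av d l set0 [::]
| greedy_cons (Rem : {set T}) (v : T) (s : seq T) :
    v \in Rem ->
    (forall j, j \in Rem -> av v <= av j) ->
    greedy_run av d l (Rem :\: [set j in Rem | d j v <= 2 * l%:R * av j]) s ->
    greedy_run av d l Rem (v :: s).
End Defs.

(* Main.v *)
Require Import Defs.
From HB Require Import structures.
From mathcomp Require Import all_boot all_order all_algebra.
From mathcomp Require Import lra.
Import Order.TTheory GRing.Theory Num.Theory.
Local Open Scope ring_scope.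

Section G.
Variables (R : realFieldType) (T : finType) (av : T -> R) (d : T -> T -> R) (l : nat).

Lemma gr_sub {Rem s} : greedy_run av d l Rem s -> {subset s <= Rem}.
Proof.
elim=> [//|Rm v s' vR _ _ IH] w; rewrite inE => /orP [/eqP -> //|/IH].
by rewrite inE => /andP [].
Qed.

Lemma gr_cover {Rem s} : greedy_run av d l Rem s -> forall j, j \in Rem ->
  exists2 v, v \in s & av v <= av j /\ d j v <= 2 * l%:R * av j.
Proof.
elim=> [j|Rm v s' vR hmin _ IH j jR]; first by rewrite inE.
have [hj|hj] := boolP (d j v <= 2 * l%:R * av j).
  by exists v; [rewrite inE eqxx | split => //; apply: hmin].
have [w ws hw] : exists2 w, w \in s' & av w <= av j /\ d j w <= 2 * l%:R * av j.
  by apply: IH; rewrite !inE jR (negbTE hj) andbF.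
by exists w => //; rewrite inE ws orbT.
Qed.

Lemma gr_sep (C : {set T}) (hsym : {in C &, forall a b, d a b = d b a})
  {Rem s} : greedy_run av d l Rem s -> Rem \subset C ->
  forall v v', v \in s -> v' \in s -> v != v' ->
    2 * l%:R * Num.max (av v) (av v') < d v v'.
Proof.
elim=> [//|Rm v s' vR hmin hr IH] hsub.
have sub' : Rm :\: [set j in Rm | d j v <= 2 * l%:R * av j] \subset C.
  by apply: subset_trans hsub; apply: subsetDl.
have key : forall w, w \in s' -> av v <= av w /\ 2 * l%:R * av w < d v w.
  move=> w ws; have := gr_sub hr _ ws; rewrite !inE => /andP [hn wR].
  rewrite wR /= -ltNge in hn; split; first exact: hmin.
  by rewrite hsym ?(subsetP hsub).
move=> a b; rewrite !inE => /orP [/eqP ->|ha] /orP [/eqP ->|hb].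
- by rewrite eqxx.
- move=> _; have [h1 h2] := key b hb.
  by rewrite (max_idPr h1).
- move=> _; have [h1 h2] := key a ha.
  rewrite (max_idPl h1).
  have aR : a \in Rm by have := gr_sub hr _ ha; rewrite inE => /andP[].
  by rewrite hsym ?(subsetP hsub).
- by apply: IH.
Qed.
End G.
Arguments gr_sub {R T av d l Rem s}.
Arguments gr_cover {R T av d l Rem s}.
Arguments gr_sep {R T av d l C} hsym {Rem s}.

Theorem claim2 (R : realFieldType) (T : finType) (F C : {set T})
  (d : T -> T -> R) (k u l : nat) (x : T -> T -> R) (y : T -> R)
  (hd : metric_on (F :|: C) d)
  (hk : (0 < k)%N) (hu : (0 < u)%N) (hl : (0 < l)%N)
  (hx0 : forall i j, i \in F -> j \in C -> 0 <= x i j)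
  (hy0 : forall i, i \in F -> 0 <= y i)
  (hx1 : forall j, j \in C -> \sum_(i in F) x i j = 1)
  (hyk : \sum_(i in F) y i <= k%:R)
  (hxy : forall i j, i \in F -> j \in C -> x i j <= y i)
  (hcap : forall i, i \in F -> \sum_(j in C) x i j <= u%:R * y i)
  (s : seq T) (hs : greedy_run (dav F x d) d l C s)
  (assign : T -> T)
  (hassign : forall i, i \in F -> assign i \in s)
  (hclosest : forall i v, i \in F -> v \in s -> d i (assign i) <= d i v) :
  let Cstar := [set v in s] in
  let U := fun v => [set i in F | assign i == v] in
  let av := dav F x d in
  [/\ (forall v v', v \in Cstar -> v' \in Cstar -> v != v' ->
         2 * l%:R * Num.max (av v) (av v') < d v v'),
      (forall j, j \in C -> exists2 v, v \in Cstar &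
         av v <= av j /\ d v j <= 2 * l%:R * av j),
      (forall v, v \in Cstar -> 1 - 1 / l%:R <= \sum_(i in U v) y i) &
      (forall v i j, v \in Cstar -> i \in U v -> j \in C ->
         d i v <= d i j + 2 * l%:R * av j)].
Proof.
move=> Cstar U av.
case: hd => h0 hpos hsym htri.
have inFC1 : forall a, a \in F -> a \in F :|: C by move=> a ha; rewrite inE ha.
have inFC2 : forall a, a \in C -> a \in F :|: C by move=> a ha; rewrite inE ha orbT.
have symC : {in C &, forall a b, d a b = d b a}.
  by move=> a b ha hb; apply: hsym; auto.
have sC : {subset s <= C} := gr_sub hs.
have C1 : forall v v', v \in Cstar -> v' \in Cstar -> v != v' ->
         2 * l%:R * Num.max (av v) (av v') < d v v'.
  move=> v v'; rewrite !inE; exact: (gr_sep symC hs (subxx C)).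
have C2 : forall j, j \in C -> exists2 v, v \in Cstar &
         av v <= av j /\ d v j <= 2 * l%:R * av j.
  move=> j jC; have [v vs [h1 h2]] := gr_cover hs _ jC.
  exists v; first by rewrite inE.
  by rewrite (symC v j (sC _ vs) jC).
split => //.
- move=> v; rewrite inE => vs; have vC := sC _ vs.
  have lpos : 0 < l%:R :> R by rewrite ltr0n.
  set N := [set i in F | d i v <= l%:R * av v].
  have NF : N \subset F by apply/subsetP => i; rewrite inE => /andP[].
  have NU : N \subset U v.
    apply/subsetP => i; rewrite !inE => /andP [iF hi]; rewrite iF /=.
    apply/negPn/negP => hne.
    have ws := hassign i iF; have wC := sC _ ws.
    have h1 := C1 v (assign i) ltac:(by rewrite inE) ltac:(by rewrite inE)
      ltac:(by rewrite eq_sym).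
    have h2 := hclosest i v iF vs.
    have h3 := htri v i (assign i) (inFC2 _ vC) (inFC1 _ iF) (inFC2 _ wC).
    rewrite (hsym v i (inFC2 _ vC) (inFC1 _ iF)) in h3.
    have hm : av v <= Num.max (av v) (av (assign i)) by rewrite le_max lexx.
    have hm' : l%:R * av v <= l%:R * Num.max (av v) (av (assign i)).
      by rewrite ler_wpM2l // ltW.
    lra.
  have e1 : \sum_(i in N) y i <= \sum_(i in U v) y i.
    rewrite [X in _ <= X](big_setID N) /= (setIidPr NU) lerDl.
    by apply: sumr_ge0 => i; rewrite !inE => /andP [_ /andP [iF _]]; apply: hy0.
  have e2 : \sum_(i in N) x i v <= \sum_(i in N) y i.
    by apply: ler_sum => i iN; apply: hxy => //; apply: (subsetP NF).
  have e3 : \sum_(i in F) x i v = \sum_(i in N) x i v + \sum_(i in F :\: N) x i v.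
    by rewrite (big_setID N) /= (setIidPr NF).
  have avge0 : 0 <= av v.
    apply: sumr_ge0 => i iF; apply: mulr_ge0; first exact: hx0.
    by apply: hpos; [apply: inFC1 | apply: inFC2].
  have tge0 : forall i, i \in F -> 0 <= x i v * d i v.
    move=> i iF; apply: mulr_ge0; first exact: hx0.
    by apply: hpos; [apply: inFC1 | apply: inFC2].
  have e4 : (\sum_(i in F :\: N) x i v) * l%:R <= 1.
    have mk : (\sum_(i in F :\: N) x i v) * (l%:R * av v) <= av v.
      rewrite mulr_suml.
      apply: (@le_trans _ _ (\sum_(i in F :\: N) x i v * d i v)).
        apply: ler_sum => i; rewrite !inE => /andP [hn iF].
        rewrite iF /= -ltNge in hn.
        by apply: ler_wpM2l; [apply: hx0 | apply: ltW].
      rewrite /av /dav [X in _ <= X](big_setID N) /= lerDr.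
      by apply: sumr_ge0 => i; rewrite inE => /andP [iF _]; apply: tge0.
    have [avp|av0] := boolP (0 < av v).
      by rewrite -(ler_pM2r avp) mul1r -mulrA.
    have av0' : av v = 0 by apply/eqP; rewrite eq_le avge0 andbT leNgt.
    rewrite big1 ?mul0r ?ler01 // => i; rewrite !inE => /andP [hn iF].
    rewrite iF /= av0' mulr0 -ltNge in hn.
    have := psumr_eq0P tge0 av0' iF.
    by move/eqP; rewrite mulf_eq0 (gt_eqF hn) orbF => /eqP.
  have e5 : \sum_(i in F :\: N) x i v <= 1 / l%:R by rewrite ler_pdivlMr.
  have := hx1 v vC; lra.
- move=> v i j; rewrite !inE => vs /andP [iF /eqP <-] jC.
  have [w ws [_ hw]] := C2 j jC; rewrite inE in ws.
  have := hclosest i w iF ws.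
  have := htri i j w (inFC1 _ iF) (inFC2 _ jC) (inFC2 _ (sC _ ws)).
  have wC := sC _ ws.
  rewrite (symC j w jC wC) => h1 h2. lra.
Qed.
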